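(* Let $(A,B)\in\mathcal{AB}$ and let $\mu$ be a matching that is component-wise individually rational at $(A,B)$. Then $\mu$ is unambiguously efficient at $(A,B)$ if and only if there is no cycle of $\mu$ that is both component-wise individually rational at $(A,B)$ and Pareto-improving.
   Context: Setup. $I=\{1,\dots,n\}$ is a finite set of agents and $O$ a finite set of objects. Each agent $i$ is endowed with a nonempty set $\Omega_i\subseteq O$; the sets $\Omega_i$ are pairwise disjoint and $\bigcup_{i\in I}\Omega_i=O$. A matching is a map $\mu:I\to 2^O$ with $\mu(i)\cap\mu(j)=\emptyset$ for $i\neq j$ and $|\mu(i)|=|\Omega_i|$ for every $i$; $\mathcal M$ is the set of matchings. Agent $i$'s consumption set is $\mathcal X_i=\{X\subseteq O:|X|=|\Omega_i|\}$; a preference of $i$ is a complete, transitive, reflexive relation $R_i$ on $\mathcal X_i$ with strict part $P_i$. A marginal preference of $i$ is a weak order $\succsim_i$ on $O$. $R_i$ is responsive to $\succsim_i$ if for all $o,p\in O$ and all $Q\in\mathcal X_i$ with $o\in Q$, $p\notin Q$: $Q\mathrel{R_i}(Q\setminus\{o\})\cup\{p\}$ iff $o\succsim_i p$. Given a profile $R$, $\mu'$ Pareto-improves $\mu$ if $\mu'(i)\mathrel{R_i}\mu(i)$ for all $i$ and $\mu'(i)\mathrel{P_i}\mu(i)$ for some $i$; $\mu$ is Pareto-efficient if no matching Pareto-improves it. Given a profile $\succsim$ of marginal preferences, $\mu$ is unambiguously efficient if it is Pareto-efficient at every profile $R$ such that each $R_i$ is responsive to $\succsim_i$. The matching $\mu$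 is component-wise individually rational at $\succsim$ if for every $i\in I$ and every $\omega\in\Omega_i$, $|\{o\in\mu(i):o\succsim_i\omega\}|\ge|\{o\in\Omega_i:o\succsim_i\omega\}|$. Trichotomous profiles. $\mathcal{AB}_i$ is the set of pairs $(A_i,B_i)$ of disjoint subsets of $O$ with $\Omega_i\subseteq A_i\cup B_i$, and $\mathcal{AB}=\times_{i\in I}\mathcal{AB}_i$. A pair $(A_i,B_i)$ induces the marginal preference $\succsim_i$ in which all objects of $A_i$ are indifferent to each other and strictly preferred to all objects of $B_i$, which are indifferent to each other and strictly preferred to all objects of $O\setminus(A_i\cup B_i)$, which are indifferent to each other. Properties ''at $(A,B)$'' refer to the induced marginal profile. Cycles. Given a matching $\mu$, a cycle of $\mu$ is $C=(i_1,o_1,i_2,o_2,\dots,i_L,o_L)$ with distinct agents and distinct objects such that for each $l\in\{2,\dots,L\}$, $o_{l-1}\in\mu(i_l)$ and $o_l\notin\mu(i_l)$, and $o_L\in\mu(i_1)$. The matching $\mu+C$ is obtained from $\mu$ by replacing, for each $l\in\{2,\dots,L\}$, $o_{l-1}$ in $\mu(i_l)$ by $o_l$, and replacing $o_L$ in $\mu(i_1)$ by $o_1$. The cycle $C$ is component-wise individually rational at $(A,B)$ if $o_l\in A_{i_l}\cup B_{i_l}$ for every $l$. $C$ increases (resp. decreases) $i$'s welfare if $|(\mu+C)(i)\cap A_i|>|\mu(i)\cap A_i|$ (resp. $<$); $C$ is Pareto-improving if it increases some agent's welfare and decreases no agent's welfare. *)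

(* Defs.v *)
From mathcomp Require Import all_boot.
Set Implicit Arguments. Unset Strict Implicit. Unset Printing Implicit Defensive.

Section Model.
Variables (I O : finType).

Definition endowment (Omega : I -> {set O}) : Prop :=
  [/\ (forall i, Omega i != set0),
      (forall i j, i != j -> [disjoint Omega i & Omega j]) &
      (\bigcup_(i in I) Omega i = [set: O])].

Definition matching (Omega : I -> {set O}) (mu : I -> {set O}) : Prop :=
  (forall i j, i != j -> [disjoint mu i & mu j]) /\
  (forall i, #|mu i| = #|Omega i|).

Definition consumption (Omega : I -> {set O}) (i : I) (X : {set O}) : bool :=
  #|X| == #|Omega i|.

Definition preference (Omega : I -> {set O}) (i : I)
    (Ri : {set O} -> {set O} -> Prop) : Prop :=
  [/\ (forall X Y, consumption Omega i X -> consumption Omega i Y ->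
         Ri X Y \/ Ri Y X),
      (forall X Y Z, consumption Omega i X -> consumption Omega i Y ->
         consumption Omega i Z -> Ri X Y -> Ri Y Z -> Ri X Z) &
      (forall X, consumption Omega i X -> Ri X X)].

Definition strict (Ri : {set O} -> {set O} -> Prop) (X Y : {set O}) : Prop :=
  Ri X Y /\ ~ Ri Y X.

Definition responsive (Omega : I -> {set O}) (i : I)
    (Ri : {set O} -> {set O} -> Prop) (mi : rel O) : Prop :=
  forall (o p : O) (Q : {set O}), consumption Omega i Q -> o \in Q -> p \notin Q ->
    (Ri Q (p |: (Q :\ o)) <-> mi o p).

Definition pareto_improves (R : I -> {set O} -> {set O} -> Prop)
    (mu' mu : I -> {set O}) : Prop :=
  (forall i, R i (mu' i) (mu i)) /\ (exists i, strict (R i) (mu' i) (mu i)).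

Definition pareto_efficient (Omega : I -> {set O})
    (R : I -> {set O} -> {set O} -> Prop) (mu : I -> {set O}) : Prop :=
  forall mu', matching Omega mu' -> ~ pareto_improves R mu' mu.

Definition unamb_efficient (Omega : I -> {set O}) (m : I -> rel O)
    (mu : I -> {set O}) : Prop :=
  forall R : I -> {set O} -> {set O} -> Prop,
    (forall i, preference Omega i (R i)) ->
    (forall i, responsive Omega i (R i) (m i)) ->
    pareto_efficient Omega R mu.

Definition cw_IR (Omega : I -> {set O}) (m : I -> rel O) (mu : I -> {set O}) : Prop :=
  forall i, forall w, w \in Omega i ->
    #|[set o in Omega i | m i o w]| <= #|[set o in mu i | m i o w]|.

Definition AB_profile (Omega : I -> {set O}) (A B : I -> {set O}) : Prop :=
  forall i, [disjoint A i & B i] /\ Omega i \subset A i :|: B i.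

Definition ab_level (A B : I -> {set O}) (i : I) (o : O) : nat :=
  if o \in A i then 2 else if o \in B i then 1 else 0.

Definition ab_marginal (A B : I -> {set O}) (i : I) : rel O :=
  fun o p => ab_level A B i p <= ab_level A B i o.

(* Cycles. A cycle C = (i_1,o_1,...,i_L,o_L) is a nonempty sequence c of pairs,
   with c`_k = (i_{k+1}, o_{k+1}) (0-indexed). *)

Section Cycles.
Variables (mu : I -> {set O}) (x0 : I * O) (c : seq (I * O)).
Let C := x0 :: c.
Let L := size C.
Definition cag (k : nat) : I := (nth x0 C k).1.
Definition cob (k : nat) : O := (nth x0 C k).2.
(* The object that agent at position k gives up: o_{l-1} for l >= 2, o_L for l = 1. *)
Definition cprev (k : nat) : O := if k == 0 then cob L.-1 else cob k.-1.

Definition is_cycle : Prop :=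
  [/\ uniq (map fst C), uniq (map snd C),
      (forall k, 0 < k < L -> cob k.-1 \in mu (cag k) /\ cob k \notin mu (cag k)) &
      cob L.-1 \in mu (cag 0)].

Definition add_cycle : I -> {set O} :=
  fun i => let k := index i (map fst C) in
    if k < L then cob k |: (mu i :\ cprev k) else mu i.
End Cycles.

Definition cycle_cw_IR (A B : I -> {set O}) (x0 : I * O) (c : seq (I * O)) : Prop :=
  forall k, k < size (x0 :: c) ->
    cob x0 c k \in A (cag x0 c k) :|: B (cag x0 c k).

Definition increases (A : I -> {set O}) (mu : I -> {set O}) x0 c (i : I) : Prop :=
  #|mu i :&: A i| < #|add_cycle mu x0 c i :&: A i|.
Definition decreases (A : I -> {set O}) (mu : I -> {set O}) x0 c (i : I) : Prop :=
  #|add_cycle mu x0 c i :&: A i| < #|mu i :&: A i|.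

Definition pareto_improving_cycle (A : I -> {set O}) (mu : I -> {set O}) x0 c : Prop :=
  (exists i, increases A mu x0 c i) /\ (forall i, ~ decreases A mu x0 c i).

End Model.

(* Main.v *)
Require Import Defs.
From mathcomp Require Import all_boot zify.
Set Implicit Arguments. Unset Strict Implicit. Unset Printing Implicit Defensive.

Section Gen.
Variable T : finType.
Implicit Types X Y Z W : {set T}.

Lemma cnt_swap X Z g r : g \in X -> r \notin X ->
  #|(r |: (X :\ g)) :&: Z| + (g \in Z) = #|X :&: Z| + (r \in Z).
Proof.
move=> gX rX.
rewrite (cardsD1 g (X :&: Z)) (cardsD1 r ((r |: (X :\ g)) :&: Z)).
have -> : ((r |: (X :\ g)) :&: Z) :\ r = (X :&: Z) :\ g.
  apply/setP=> x; rewrite !inE; case: (x =P r) => [->|/eqP xr] /=.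
    by rewrite (negbTE rX) !andbF.
  by rewrite andbA.
rewrite !inE eqxx gX /=; lia.
Qed.

Lemma ex_notin Z W : #|Z :&: W| < #|Z| -> exists2 z, z \in Z & z \notin W.
Proof.
move=> h; apply/exists_inP; apply: contraLR h; rewrite negb_exists_in => /forall_inP h.
have -> : Z :&: W = Z by apply/setIidPl/subsetP=> z /h; rewrite negbK.
by rewrite ltnn.
Qed.

Lemma ex_in Z W : 0 < #|Z :&: W| -> exists2 z, z \in Z & z \in W.
Proof. by rewrite card_gt0 => /set0Pn[z]; rewrite inE => /andP[]; exists z. Qed.

Lemma card_setI_uniq (s : seq T) Z : uniq s ->
  #|Z :&: [set w in s]| = count (mem Z) s.
Proof.
move=> us; have -> : Z :&: [set w in s] = [set w in filter (mem Z) s].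
  by apply/setP=> w; rewrite !inE mem_filter.
rewrite cardsE (card_uniqP _) ?filter_uniq // size_filter //.
Qed.

Lemma disjF X Y x : [disjoint X & Y] -> x \in X -> x \in Y -> False.
Proof. by move=> d xX; rewrite (disjointFr d xX). Qed.

Lemma disjI X Y : (forall x, x \in X -> x \in Y -> False) -> [disjoint X & Y].
Proof.
move=> h; rewrite -setI_eq0; apply/eqP/setP => x; rewrite !inE.
by apply/negP => /andP[a b]; apply: (h x a b).
Qed.

End Gen.

Section Cyc.
Variables (I O : finType) (mu : I -> {set O}) (x0 : I * O) (c : seq (I * O)).
Local Notation C := (x0 :: c).
Local Notation L := (size (x0 :: c)).
Definition pk k := if k == 0 then L.-1 else k.-1.
Definition nk k := if k.+1 < L then k.+1 else 0.

Lemma pk_lt k : k < L -> pk k < L.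
Proof. rewrite /pk; case: eqP => /= h; lia. Qed.
Lemma nk_lt k : k < L -> nk k < L.
Proof. rewrite /nk; case: ifP => /= h; lia. Qed.
Lemma pk_nk k : k < L -> pk (nk k) = k.
Proof. move=> lt; rewrite /pk /nk /=; case: ltnP => h /=; move: h lt => /=; lia. Qed.

Lemma cprevE k : cprev x0 c k = cob x0 c (pk k).
Proof. by rewrite /cprev /pk; case: eqP. Qed.

Lemma cag_nth k : cag x0 c k = nth x0.1 (map fst C) k.
Proof.
rewrite /cag; have [lt|ge] := ltnP k L; first by rewrite (nth_map x0).
by rewrite !nth_default ?size_map.
Qed.

Lemma cag_index k : k < L -> uniq (map fst C) ->
  index (cag x0 c k) (map fst C) = k.
Proof. by move=> lt u; rewrite cag_nth index_uniq ?size_map. Qed.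

Lemma add_in k : k < L -> uniq (map fst C) ->
  add_cycle mu x0 c (cag x0 c k) = cob x0 c k |: (mu (cag x0 c k) :\ cprev x0 c k).
Proof. by move=> lt u; rewrite /add_cycle cag_index // lt. Qed.

Lemma add_out i : i \notin map fst C -> add_cycle mu x0 c i = mu i.
Proof. by move=> ni; rewrite /add_cycle memNindex // size_map ltnn. Qed.

Lemma agent_cases i : i \in map fst C -> exists2 k, k < L & i = cag x0 c k.
Proof.
move=> iC; exists (index i (map fst C)); first by rewrite -(size_map fst) index_mem.
by rewrite cag_nth nth_index.
Qed.

Lemma cycle_nth (e : rel (I * O)) : cycle e C ->
  forall k, k < L -> e (nth x0 C (pk k)) (nth x0 C k).
Proof.
move=> /= /(pathP x0) h k lt.
have hs : size (rcons c x0) = L by rewrite size_rcons.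
have E1 i : i < L -> nth x0 (x0 :: rcons c x0) i = nth x0 C i.
  by move=> li; rewrite -rcons_cons nth_rcons /= li.
case: k lt => [|k] lt.
  have := h (size c); rewrite hs ltnSn => /(_ isT).
  rewrite E1 // nth_rcons ltnn eqxx /pk /=. done.
have := h k; rewrite hs ltnW // => /(_ isT).
rewrite E1 ?(ltnW lt) // nth_rcons /=; rewrite /= ltnS in lt; rewrite lt.
by rewrite /pk.
Qed.

Lemma next_index x : x \in C ->
  exists k, [/\ k < L, nth x0 C (pk k) = x & nth x0 C k = next C x].
Proof.
move=> xC; have hi : index x C < L by rewrite index_mem.
rewrite next_nth xC.
have [lt|ge] := ltnP (index x C).+1 L.
  exists (index x C).+1; split => //.
  by rewrite /pk /= nth_index.
exists 0; split => //.
  have -> : pk 0 = index x C by rewrite /pk /=; move: hi ge => /=; lia.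
  by rewrite nth_index.
by rewrite /= nth_default //; move: hi ge => /=; lia.
Qed.

End Cyc.

Section Fwd.
Variables (I O : finType) (Omega A B mu : I -> {set O}).
Implicit Types (X Y : {set O}) (g r o : O) (i : I).

Definition lvl i o := ab_level A B i o.
Definition util i (X : {set O}) := \sum_(x in X) lvl i x.
Definition Rf i (X Y : {set O}) : Prop := util i Y <= util i X.

Lemma util_swap i X g r : g \in X -> r \notin X ->
  util i (r |: (X :\ g)) + lvl i g = util i X + lvl i r.
Proof.
move=> gX rX; rewrite /util (big_setD1 g gX) big_setU1 /=; last by rewrite !inE negb_and rX orbT.
lia.
Qed.

Lemma Rf_pref i : preference Omega i (Rf i).
Proof.
split; rewrite /Rf.
- by move=> X Y _ _; case: (leqP (util i Y) (util i X)) => h; [left|right; apply: ltnW].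
- by move=> X Y Z _ _ _ h1 h2; apply: leq_trans h1.
- by [].
Qed.

Lemma Rf_resp i : responsive Omega i (Rf i) (ab_marginal A B i).
Proof.
move=> o p Q _ oQ pQ; rewrite /Rf /ab_marginal.
have := util_swap i oQ pQ; rewrite /lvl => h.
split => [h1|h1]; apply/leP; move/leP: h1; lia.
Qed.

Lemma lvl_le i g r : (g \in A i) <= (r \in A i) -> r \in A i :|: B i -> lvl i g <= lvl i r.
Proof.
rewrite /lvl /ab_level inE.
by case: (g \in A i); case: (r \in A i); case: (g \in B i); case: (r \in B i).
Qed.

Lemma lvl_lt i g r : r \in A i -> g \notin A i -> lvl i g < lvl i r.
Proof.
rewrite /lvl /ab_level => -> /negbTE ->; by case: (g \in B i).
Qed.

Section C.
Variables (x0 : I * O) (c : seq (I * O)).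
Local Notation C := (x0 :: c).
Local Notation L := (size (x0 :: c)).

Lemma cag_inj a b : a < L -> b < L -> uniq (map fst C) ->
  cag x0 c a = cag x0 c b -> a = b.
Proof. by move=> la lb u e; rewrite -(cag_index la u) -(cag_index lb u) e. Qed.

Lemma cob_inj a b : a < L -> b < L -> uniq (map snd C) ->
  cob x0 c a = cob x0 c b -> a = b.
Proof.
move=> la lb u; rewrite /cob -!(nth_map x0 x0.2) //.
by move/eqP; rewrite nth_uniq ?size_map // => /eqP.
Qed.

Lemma memAdd i o : uniq (map fst C) -> o \in add_cycle mu x0 c i ->
  (exists2 k, k < L & i = cag x0 c k /\ o = cob x0 c k) \/
  (o \in mu i /\ forall k, k < L -> i = cag x0 c k -> o != cprev x0 c k).
Proof.
move=> u; case: (boolP (i \in map fst C)) => iC.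
  have [k lk ->] := agent_cases iC.
  rewrite add_in // => /setU1P[->|]; first by left; exists k.
  rewrite !inE => /andP[ne om]; right; split => // k' lk' /(cag_inj lk lk' u) <-.
  exact: ne.
rewrite add_out // => om; right; split => // k lk ik.
by move: iC; rewrite ik cag_nth mem_nth // size_map.
Qed.

Lemma forward_cycle : matching Omega mu -> is_cycle mu x0 c ->
  cycle_cw_IR A B x0 c -> pareto_improving_cycle A mu x0 c ->
  ~ unamb_efficient Omega (ab_marginal A B) mu.
Proof.
move=> [mdisj mcard] [u1 u2 hmid hlast] hIR [[i0 hinc] hnodec] UE.
have Hprev : forall k, k < L -> cprev x0 c k \in mu (cag x0 c k).
  move=> [|k] lk; first by [].
  by rewrite /cprev /=; case: (hmid k.+1).
have Hown : forall k, k < L -> cob x0 c k \in mu (cag x0 c (nk x0 c k)).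
  by move=> k lk; have := Hprev _ (nk_lt lk); rewrite cprevE pk_nk.
have [c0|cn] := eqVneq c [::].
  move: hinc; rewrite /increases c0.
  case: (boolP (i0 \in map fst [:: x0])) => iC.
    have [k lk ->] := agent_cases iC.
    have k0 : k = 0 by case: k lk.
    subst k; rewrite add_in // cprevE /pk /= setD1K ?ltnn //.
    by have := Hprev 0 isT; rewrite c0 cprevE.
  by rewrite add_out // ltnn.
have cpos : 0 < size c by case: (c) cn.
have Hnot : forall k, k < L -> cob x0 c k \notin mu (cag x0 c k).
  move=> k lk; have hne : cag x0 c (nk x0 c k) != cag x0 c k.
    apply/eqP => /(cag_inj (nk_lt lk) lk u1); rewrite /nk; case: ifP => /= h; lia.
  by apply/negP => h; apply: (disjF (mdisj _ _ hne) (Hown _ lk) h).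
pose mu' := add_cycle mu x0 c.
have Hin : forall k, k < L ->
   [/\ mu' (cag x0 c k) = cob x0 c k |: (mu (cag x0 c k) :\ cprev x0 c k),
       #|mu' (cag x0 c k) :&: A (cag x0 c k)| + (cprev x0 c k \in A (cag x0 c k)) =
         #|mu (cag x0 c k) :&: A (cag x0 c k)| + (cob x0 c k \in A (cag x0 c k)) &
       util (cag x0 c k) (mu' (cag x0 c k)) + lvl (cag x0 c k) (cprev x0 c k) =
         util (cag x0 c k) (mu (cag x0 c k)) + lvl (cag x0 c k) (cob x0 c k)].
  move=> k lk; have e := add_in mu lk u1; rewrite /mu' e; split => //.
    exact: cnt_swap (Hprev _ lk) (Hnot _ lk).
  exact: util_swap (Hprev _ lk) (Hnot _ lk).
have Hweak : forall i, Rf i (mu' i) (mu i).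
  move=> i; case: (boolP (i \in map fst C)) => iC; last by rewrite /Rf /mu' add_out.
  have [k lk ->] := agent_cases iC; have [_ e1 e2] := Hin _ lk.
  have h1 := hnodec (cag x0 c k); rewrite /decreases -/mu' in h1.
  have h2 : (cprev x0 c k \in A (cag x0 c k)) <= (cob x0 c k \in A (cag x0 c k)).
    move: e1 h1; case: (cprev _ _ _ \in _); case: (cob _ _ _ \in _) => //=; lia.
  have := lvl_le h2 (hIR _ lk); rewrite /Rf; lia.
have Hstrict : strict (Rf i0) (mu' i0) (mu i0).
  move: hinc; rewrite /increases -/mu'.
  case: (boolP (i0 \in map fst C)) => iC; last by rewrite /mu' add_out // ltnn.
  have [k lk ->] := agent_cases iC; have [_ e1 e2] := Hin _ lk => h.
  have hA : cob x0 c k \in A (cag x0 c k).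
    by move: e1 h; case: (cprev _ _ _ \in _); case: (cob _ _ _ \in _) => //=; lia.
  have hB : cprev x0 c k \notin A (cag x0 c k).
    by move: e1 h; case: (cprev _ _ _ \in _); case: (cob _ _ _ \in _) => //=; lia.
  have := lvl_lt hA hB; rewrite /strict /Rf => h3; split; lia.
apply: (UE Rf Rf_pref Rf_resp mu') => //; last by split => //; exists i0.
split.
  move=> i i' ii'; apply: disjI => o h1 h2.
  have Hc : forall i i', i != i' -> o \in mu' i -> o \in mu' i' ->
     (exists2 k, k < L & i = cag x0 c k /\ o = cob x0 c k) ->
     (o \in mu i' /\ forall k, k < L -> i' = cag x0 c k -> o != cprev x0 c k) -> False.
    move=> j j' jj' _ _ [k lk [ej eo]] [om hn].
    have ho := Hown _ lk; rewrite -eo in ho.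
    case: (eqVneq j' (cag x0 c (nk x0 c k))) => e.
      by have := hn _ (nk_lt lk) e; rewrite cprevE pk_nk // eo eqxx.
    exact: (disjF (mdisj _ _ e) om ho).
  case: (memAdd u1 h1) => H1; case: (memAdd u1 h2) => H2.
  - case: H1 => k lk [e1 eo1]; case: H2 => k' lk' [e2 eo2].
    have kk := cob_inj lk lk' u2 (etrans (esym eo1) eo2).
    by move: ii'; rewrite e1 e2 kk eqxx.
  - exact: (Hc i i').
  - by apply: (Hc i' i) => //; rewrite eq_sym.
  - case: H1 H2 => om1 _ [om2 _]; exact: (disjF (mdisj _ _ ii') om1 om2).
move=> i; case: (boolP (i \in map fst C)) => iC; last by rewrite /mu' add_out.
have [k lk ->] := agent_cases iC; have [e1 _ _] := Hin _ lk.
have := cnt_swap (setT) (Hprev _ lk) (Hnot _ lk).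
rewrite !setIT !inE -e1 => h; rewrite -mcard; apply/eqP; rewrite -(eqn_add2r 1); apply/eqP; exact: h.
Qed.

End C.
End Fwd.

Section Gen2.
Variable T : finType.
Implicit Types X Y Z W : {set T}.
Lemma card_split Z Y W : #|Z :&: W| = #|Z :&: Y :&: W| + #|(Z :\: Y) :&: W|.
Proof.
rewrite -(cardsID Y (Z :&: W)); congr (_ + _); apply: eq_card => x; rewrite !inE;
  by case: (x \in Z); case: (x \in Y); case: (x \in W).
Qed.

Lemma cardD_sym X Y : #|X| = #|Y| -> #|X :\: Y| = #|Y :\: X|.
Proof. by move=> e; rewrite !cardsD e setIC. Qed.

Lemma lt_card_notin Z W x : x \in Z -> x \notin W -> #|Z :&: W| < #|Z|.
Proof.
move=> xZ xW; rewrite (cardsD1 x Z) xZ add1n ltnS; apply: subset_leq_card.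
by apply/subsetP => y; rewrite !inE => /andP[a b]; rewrite a andbT; apply: contraNneq xW => <-.
Qed.
End Gen2.

Section Dom.
Variables (I O : finType) (Omega A B : I -> {set O}) (i : I).
Variable R : {set O} -> {set O} -> Prop.
Hypothesis hpref : preference Omega i R.
Hypothesis hresp : responsive Omega i R (ab_marginal A B i).
Implicit Types (X Y Z : {set O}) (x y : O).

Lemma cons_swap X x y : consumption Omega i X -> x \in X -> y \notin X ->
  consumption Omega i (y |: (X :\ x)).
Proof.
move=> cX xX yX; move: cX; rewrite /consumption => /eqP <-.
have := cnt_swap setT xX yX; rewrite !setIT !inE => h; apply/eqP.
by apply/eqP; rewrite -(eqn_add2r 1); apply/eqP; exact: h.
Qed.

Lemma swapR X x y : consumption Omega i X -> x \in X -> y \notin X ->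
  lvl A B i x <= lvl A B i y -> R (y |: (X :\ x)) X.
Proof.
move=> cX xX yX le.
have xy : x != y by apply: contraNneq yX => <-.
have h := hresp (cons_swap cX xX yX) (setU11 y _) (_ : x \notin y |: (X :\ x)).
have e : x |: ((y |: (X :\ x)) :\ y) = X.
  apply/setP => z; rewrite !inE; case: (z =P x) => [->|/eqP zx] //=.
  by case: (z =P y) => [->|] //=; rewrite (negbTE yX).
rewrite e in h; apply/h; first by rewrite !inE negb_or xy eqxx.
by rewrite /ab_marginal.
Qed.

Lemma swapNR X x y : consumption Omega i X -> x \in X -> y \notin X ->
  lvl A B i x < lvl A B i y -> ~ R X (y |: (X :\ x)).
Proof.
move=> cX xX yX lt /(hresp cX xX yX); rewrite /ab_marginal -/(lvl A B i y) -/(lvl A B i x).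
by rewrite leqNgt lt.
Qed.

Let AB := A i :|: B i.

Lemma pick_y X Y x : consumption Omega i X -> consumption Omega i Y ->
  #|X :&: A i| <= #|Y :&: A i| -> x \in X -> x \notin Y -> x \notin A i ->
  exists y, [/\ y \in Y, y \notin X & #|X :&: A i| + (y \in A i) <= #|Y :&: A i|].
Proof.
move=> /eqP cX /eqP cY le xX xY xA.
have eD := cardD_sym (etrans cX (esym cY)).
have F1 := card_split X Y (A i); have F2 := card_split Y X (A i).
rewrite [Y :&: X]setIC in F2.
have xD : x \in X :\: Y by rewrite inE xY.
have hlt := lt_card_notin xD xA.
have [lt|ge] := ltnP #|X :&: A i| #|Y :&: A i|.
  have : 0 < #|Y :\: X| by rewrite -eD; apply: leq_ltn_trans hlt.
  rewrite card_gt0 => /set0Pn[y]; rewrite inE => /andP[yX yY].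
  by exists y; split => //; case: (y \in A i); lia.
have : #|(Y :\: X) :&: A i| < #|Y :\: X| by lia.
move/ex_notin => [y]; rewrite inE => /andP[yX yY] yA.
by exists y; split => //; rewrite (negbTE yA) addn0.
Qed.

Lemma domR n : forall X Y, #|X :\: Y| = n -> consumption Omega i X ->
  consumption Omega i Y -> Y \subset AB -> #|X :&: A i| <= #|Y :&: A i| -> R Y X.
Proof.
case: hpref => _ htr hrefl.
elim: n => [|n IH] X Y hn cX cY sY le.
  have e : X = Y.
    apply/eqP; rewrite eqEcard -setD_eq0 -cards_eq0 hn eqxx /=.
    by move: cX cY; rewrite /consumption => /eqP -> /eqP ->.
  by rewrite e; apply: hrefl.
have step : forall x y, x \in X -> x \notin Y -> y \in Y -> y \notin X ->
    (x \in A i) <= (y \in A i) -> #|X :&: A i| + (y \in A i) <= #|Y :&: A i| + (x \in A i) ->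
    R Y X.
  move=> x y xX xY yY yX hle hinv.
  have cX' := cons_swap cX xX yX.
  have hR := swapR cX xX yX (lvl_le hle (subsetP sY _ yY)).
  apply: (htr _ _ _ cY cX' cX _ hR); apply: IH => //.
    have -> : (y |: (X :\ x)) :\: Y = (X :\: Y) :\ x.
      apply/setP => z; rewrite !inE; case: (z =P y) => [->|] /=; first by rewrite yY !andbF.
      by move=> _; case: (z \in Y); rewrite ?andbF ?andbT.
    by move: hn; rewrite (cardsD1 x) !inE xX xY /=; case.
  have := cnt_swap (A i) xX yX; lia.
have F1 := card_split X Y (A i); have F2 := card_split Y X (A i).
rewrite [Y :&: X]setIC in F2.
have eD : #|X :\: Y| = #|Y :\: X|.
  by apply: cardD_sym; move: cX cY; rewrite /consumption => /eqP -> /eqP ->.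
have [lt|ge] := ltnP #|(X :\: Y) :&: A i| #|X :\: Y|.
  have [x] := ex_notin lt; rewrite inE => /andP[xY xX] xA.
  have [y [yY yX hy]] := pick_y cX cY le xX xY xA.
  apply: (step x y) => //; first by rewrite (negbTE xA).
  by rewrite (negbTE xA) addn0.
have : 0 < #|(X :\: Y) :&: A i| by rewrite hn in ge; lia.
move/ex_in => [x]; rewrite inE => /andP[xY xX] xA.
have : 0 < #|(Y :\: X) :&: A i|.
  have : #|(X :\: Y) :&: A i| <= #|X :\: Y| by apply: subset_leq_card; apply: subsetIl.
  have : #|(Y :\: X) :&: A i| <= #|Y :\: X| by apply: subset_leq_card; apply: subsetIl.
  lia.
move/ex_in => [y]; rewrite inE => /andP[yX yY] yA.
apply: (step x y) => //; first by rewrite xA yA.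
rewrite xA yA.
have : #|(X :\: Y) :&: A i| <= #|X :\: Y| by apply: subset_leq_card; apply: subsetIl.
have : #|(Y :\: X) :&: A i| <= #|Y :\: X| by apply: subset_leq_card; apply: subsetIl.
lia.
Qed.

Lemma domS X Y : consumption Omega i X -> consumption Omega i Y ->
  Y \subset AB -> #|X :&: A i| <= #|Y :&: A i| ->
  (#|X :&: A i| < #|Y :&: A i| \/ ~~ (X \subset AB)) -> ~ R X Y.
Proof.
case: hpref => _ htr _.
move=> cX cY sY le hs hXY.
suff [x [y [xX yX xY hlv hinv]]] : exists x y, [/\ x \in X, y \notin X, x \notin Y,
    lvl A B i x < lvl A B i y & #|X :&: A i| + (y \in A i) <= #|Y :&: A i| + (x \in A i)].
  have cX' := cons_swap cX xX yX.
  apply: (swapNR cX xX yX hlv); apply: (htr _ _ _ cX cY cX' hXY).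
  apply: (domR erefl) => //.
  have := cnt_swap (A i) xX yX; lia.
have F1 := card_split X Y (A i); have F2 := card_split Y X (A i).
rewrite [Y :&: X]setIC in F2.
have eD : #|X :\: Y| = #|Y :\: X|.
  by apply: cardD_sym; move: cX cY; rewrite /consumption => /eqP -> /eqP ->.
case: hs => [lt|nsub].
  have : #|(X :\: Y) :&: A i| < #|X :\: Y|.
    have : #|(Y :\: X) :&: A i| <= #|Y :\: X| by apply: subset_leq_card; apply: subsetIl.
    lia.
  move/ex_notin => [x]; rewrite inE => /andP[xY xX] xA.
  have : 0 < #|(Y :\: X) :&: A i| by lia.
  move/ex_in => [y]; rewrite inE => /andP[yX yY] yA.
  exists x, y; split => //; first exact: lvl_lt.
  rewrite yA (negbTE xA); lia.
have [x xX xAB] : exists2 x, x \in X & x \notin AB.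
  exact/subsetPn.
have xY : x \notin Y by apply: contraNN xAB => /(subsetP sY).
have xA : x \notin A i by apply: contraNN xAB; rewrite /AB inE => ->.
have [y [yY yX hy]] := pick_y cX cY le xX xY xA.
exists x, y; split => //; last by rewrite (negbTE xA) addn0.
move: xAB (subsetP sY _ yY); rewrite /lvl /ab_level /AB !inE (negbTE xA).
by case: (x \in B i); case: (y \in A i); case: (y \in B i).
Qed.

End Dom.

Lemma perm_next (T : eqType) (s : seq T) : uniq s -> perm_eq (map (next s) s) s.
Proof.
move=> us; apply: uniq_perm => //.
  by rewrite (map_inj_uniq (can_inj (prev_next us))).
move=> x; apply/mapP/idP => [[y ys ->]|xs]; first by rewrite mem_next.
by exists (prev s x); rewrite ?mem_prev // next_prev.
Qed.

Lemma split_nuniq (T U : eqType) (f : T -> U) (s : seq T) : ~~ uniq (map f s) ->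
  exists s1 x p1 y p2, s = s1 ++ x :: p1 ++ y :: p2 /\ f x = f y.
Proof.
elim: s => [|a s IH] //=; rewrite negb_and negbK => /orP[/mapP[y ys ey]|h].
  case/splitPr: ys IH => p1 p2 _; exists [::]; exists a; exists p1; exists y; exists p2.
  by split.
have [s1 [x [p1 [y [p2 [-> e]]]]]] := IH h.
by exists (a :: s1); exists x; exists p1; exists y; exists p2.
Qed.

Section Main.
Variables (I O : finType) (A B mu : I -> {set O}).
Hypothesis mdisj : forall i j, i != j -> [disjoint mu i & mu j].

Definition legal j g r := (r \in A j :|: B j) && ((g \in A j) ==> (r \in A j)).
Definition stricts j g r := (r \in A j) && (g \notin A j).
Definition estep (Out : I -> {set O}) (x y : I * O) := (x.2 \in Out y.1) && legal y.1 x.2 y.2.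
Definition Wk (In Out : I -> {set O}) (ws : seq (I * O)) :=
  [/\ ws != [::], cycle (estep Out) ws, all (fun x => x.2 \in In x.1) ws & uniq (map snd ws)].
Definition hasS (ws : seq (I * O)) :=
  has (fun x => stricts (next ws x).1 x.2 (next ws x).2) ws.
Definition goodcycle := exists x0 c,
  [/\ is_cycle mu x0 c, cycle_cw_IR A B x0 c & pareto_improving_cycle A mu x0 c].

Record GoodIO (In Out : I -> {set O}) : Prop := {
  g1 : forall j, Out j \subset mu j;
  g2 : forall j, [disjoint In j & mu j];
  g3 : forall i i', i != i' -> [disjoint In i & In i'];
  g4 : forall i w, w \in In i -> exists j, w \in Out j;
  g5 : forall j, #|In j| = #|Out j|;
  g6 : forall j, #|Out j :&: A j| <= #|In j :&: A j|;
  g7 : forall j, #|In j :&: A j| = #|Out j :&: A j| -> In j \subset A j :|: B j }.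

Section G.
Variables (In Out : I -> {set O}).
Hypothesis G : GoodIO In Out.

Lemma Out_uniq j j' w : w \in Out j -> w \in Out j' -> j = j'.
Proof.
move=> h1 h2; apply/eqP; apply/negP => /negP ne.
exact: (disjF (mdisj ne) (subsetP (g1 G j) _ h1) (subsetP (g1 G j') _ h2)).
Qed.

Lemma In_uniq j j' w : w \in In j -> w \in In j' -> j = j'.
Proof.
move=> h1 h2; apply/eqP; apply/negP => /negP ne; exact: (disjF (g3 G ne) h1 h2).
Qed.

Lemma legal_swap j g1 r1 g2 r2 : legal j g1 r1 -> legal j g2 r2 ->
  legal j g1 r2 || legal j g2 r1.
Proof.
rewrite /legal !inE.
by case: (g1 \in A j); case: (r1 \in A j); case: (g2 \in A j); case: (r2 \in A j);
  case: (r1 \in B j); case: (r2 \in B j).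
Qed.

Lemma base ws : Wk In Out ws -> uniq (map fst ws) -> hasS ws -> goodcycle.
Proof.
case: ws => [|x0 c] []; first by rewrite eqxx.
move=> _ hcyc hall u2 u1 hs.
have E := cycle_nth hcyc.
have Inv : forall k, k < size (x0 :: c) -> cob x0 c k \in In (cag x0 c k).
  by move=> k lk; have := all_nthP x0 hall k lk.
have Hprev : forall k, k < size (x0 :: c) -> cprev x0 c k \in mu (cag x0 c k).
  move=> k lk; have /andP[h _] := E k lk; rewrite cprevE.
  exact: (subsetP (g1 G _)).
have Hnot : forall k, k < size (x0 :: c) -> cob x0 c k \notin mu (cag x0 c k).
  by move=> k lk; apply/negP => h; exact: (disjF (g2 G _) (Inv k lk) h).
have Hleg : forall k, k < size (x0 :: c) ->
    legal (cag x0 c k) (cprev x0 c k) (cob x0 c k).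
  by move=> k lk; have /andP[_ h] := E k lk; rewrite cprevE.
exists x0, c; split.
- split => //.
  + move=> k /andP[k0 lk]; split; last exact: Hnot.
    have := Hprev k lk; rewrite /cprev; case: eqP => // ke; lia.
  + exact: (Hprev 0).
- by move=> k lk; have /andP[] := Hleg k lk.
split.
  have [x xws hx] := hasP hs.
  have [k [lk e1 e2]] := next_index xws.
  exists (cag x0 c k); rewrite /increases add_in //.
  have := cnt_swap (A (cag x0 c k)) (Hprev k lk) (Hnot k lk).
  move: hx; rewrite /stricts -e2 -e1 -/(cag x0 c k) -/(cob x0 c k) cprevE.
  rewrite -/(cob x0 c (pk x0 c k)) => /andP[-> /negbTE ->]; lia.
move=> i; rewrite /decreases.
case: (boolP (i \in map fst (x0 :: c))) => iC; last by rewrite add_out // ltnn.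
have [k lk ->] := agent_cases iC; rewrite add_in //.
have := cnt_swap (A (cag x0 c k)) (Hprev k lk) (Hnot k lk).
have := Hleg k lk; rewrite /legal => /andP[_].
by case: (cprev _ _ _ \in _); case: (cob _ _ _ \in _) => //=; lia.
Qed.

Lemma inner n : forall ws, size ws <= n -> Wk In Out ws ->
  goodcycle \/ exists ws', Wk In Out ws' /\ ~~ hasS ws'.
Proof.
elim: n => [|n IH] ws hn hW.
  by case: hW; case: ws hn.
case: (boolP (hasS ws)) => hs; last by right; exists ws.
case: (boolP (uniq (map fst ws))) => hu; first by left; exact: (base hW hu hs).
have [s1 [x [p1 [y [p2 [ews exy]]]]]] := split_nuniq hu.
case: hW => _ hcyc hall hu2.
set q := p2 ++ s1.
have hcyc' : cycle (estep Out) (x :: p1 ++ y :: q).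
  by move: hcyc; rewrite ews cycle_catC /q cat_cons -catA cat_cons.
have pe : perm_eq ws (x :: p1 ++ y :: q).
  rewrite ews; have := perm_catC s1 (x :: p1 ++ y :: p2); rewrite /q cat_cons -catA cat_cons. by move=> ->.
have hall' : all (fun x => x.2 \in In x.1) (x :: p1 ++ y :: q) by rewrite -(perm_all _ pe).
have hu2' : uniq (map snd (x :: p1) ++ map snd (y :: q)).
  by rewrite -map_cat -(perm_uniq (perm_map snd pe)).
have hsz1 : size (x :: p1) <= n.
  by move: hn; rewrite ews !size_cat /= !size_cat /=; lia.
have hsz2 : size (y :: q) <= n.
  by move: hn; rewrite ews /q !size_cat /= !size_cat /=; lia.
move: hcyc'; rewrite /= rcons_cat cat_path /= rcons_path => /and4P[pp1 e1 pq e2].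
move: hu2'; rewrite cat_uniq => /and3P[u1 _ u2].
move: hall'; rewrite /= all_cat /= => /and4P[a1 a2 a3 a4].
have hxy : x.1 = y.1 by [].
move: e1 e2; rewrite /estep -hxy => /andP[o1 l1] /andP[o2 l2].
case/orP: (legal_swap l1 l2) => hl.
  apply: (IH (x :: p1)) => //; split => //=.
    by rewrite rcons_path pp1 /estep o1 hl.
  by rewrite a1 a2.
apply: (IH (y :: q)) => //; split => //=.
  by rewrite rcons_path pq /estep -hxy o2 hl.
by rewrite a3 a4.
Qed.

Section Rev.
Variable ws : seq (I * O).
Hypothesis hW : Wk In Out ws.
Local Notation S := [set w in map snd ws].

Lemma cardS Z : #|Z :&: S| = count (fun x => x.2 \in Z) ws.
Proof. by case: hW => _ _ _ u; rewrite card_setI_uniq // count_map. Qed.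

Lemma cnt_eq j (P : pred O) :
  (forall x, x \in ws -> (next ws x).1 = j -> P x.2 = P (next ws x).2) ->
  count (fun x => (x.2 \in In j) && P x.2) ws = count (fun x => (x.2 \in Out j) && P x.2) ws.
Proof.
case: hW => _ hcyc hall u hP.
have us : uniq ws := map_uniq u.
rewrite -(permP (perm_next us)) count_map; apply: eq_in_count => x xws /=.
have hy := next_cycle hcyc xws; have yws : next ws x \in ws by rewrite mem_next.
have Iy := allP hall _ yws; move: hy; rewrite /estep => /andP[ox _].
case: (eqVneq j (next ws x).1) => [e|ne].
  by rewrite e Iy ox (hP x xws (esym e)).
have -> : (next ws x).2 \in In j = false.
  by apply/negP => h; move: ne; rewrite (In_uniq h Iy) eqxx.
have -> : x.2 \in Out j = false.
  by apply/negP => h; move: ne; rewrite (Out_uniq h ox) eqxx.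
by [].
Qed.

Lemma revert : ~~ hasS ws ->
  [/\ GoodIO (fun j => In j :\: S) (fun j => Out j :\: S),
      (forall j, #|Out j :&: A j| < #|In j :&: A j| ->
          #|(Out j :\: S) :&: A j| < #|(In j :\: S) :&: A j|) &
      \sum_j #|In j :\: S| < \sum_j #|In j| ].
Proof.
move=> hns.
have c1 : forall j, #|In j :&: S| = #|Out j :&: S|.
  move=> j; rewrite !cardS.
  have := @cnt_eq j predT (fun _ _ _ => erefl).
  by rewrite (eq_count (fun x => andbT (x.2 \in In j))) (eq_count (fun x => andbT (x.2 \in Out j))).
have c2 : forall j, #|(In j :&: A j) :&: S| = #|(Out j :&: A j) :&: S|.
  move=> j; rewrite !cardS.
  rewrite (eq_count (fun x => in_setI x.2 (In j) (A j))) (eq_count (fun x => in_setI x.2 (Out j) (A j))).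
  apply: cnt_eq => x xws e.
  case: hW => _ hcyc _ _.
  have /andP[_ hl] := next_cycle hcyc xws.
  have hn := hasPn hns x xws; move: hl hn; rewrite /legal /stricts e.
  change (((next ws x).2 \in A j :|: B j) && ((x.2 \in A j) ==> ((next ws x).2 \in A j)) -> ~~ (((next ws x).2 \in A j) && (x.2 \notin A j)) -> (x.2 \in A j) = ((next ws x).2 \in A j)).
  by case: (x.2 \in A j); case: ((next ws x).2 \in A j); rewrite ?andbF.
have eD : forall Z, Z :\: S = Z :\: S by [].
have dA : forall Z j, (Z :\: S) :&: A j = (Z :&: A j) :\: S.
  by move=> Z j; rewrite setIDAC.
have le1 : forall Z, #|Z :&: S| <= #|Z| by move=> Z; apply: subset_leq_card; apply: subsetIl.
split.
- split.
  + by move=> j; apply: subset_trans (g1 G j); apply: subsetDl.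
  + move=> j; apply: disjI => w; rewrite inE => /andP[_ h1] h2; exact: (disjF (g2 G j) h1 h2).
  + move=> i i' ne; apply: disjI => w; rewrite !inE => /andP[_ h1] /andP[_ h2].
    exact: (disjF (g3 G ne) h1 h2).
  + move=> i w; rewrite inE => /andP[wS wI]; have [j hj] := g4 G wI.
    by exists j; rewrite inE wS hj.
  + by move=> j; rewrite !cardsD c1 (g5 G j).
  + move=> j; rewrite !dA !cardsD c2; have := g6 G j; have := le1 (Out j :&: A j).
    have := c2 j; lia.
  + move=> j; rewrite !dA !cardsD => e.
    have hle := le1 (Out j :&: A j); have hle' := le1 (In j :&: A j); have := c2 j.
    have hg := g6 G j.
    move=> e2; have e3 : #|In j :&: A j| = #|Out j :&: A j| by lia.
    by apply: subset_trans (g7 G e3); apply: subsetDl.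
- move=> j lt; rewrite !dA !cardsD c2; have := le1 (Out j :&: A j); have := c2 j; lia.
case: hW => ne _ hall _.
have [x xws] : exists x, x \in ws by case: (ws) ne => [|x s] //; exists x; rewrite mem_head.
have hx := allP hall x xws.
rewrite (bigD1 x.1) //= [X in _ < X](bigD1 x.1) //=.
have h1 : #|In x.1 :\: S| < #|In x.1|.
  rewrite cardsD; have : 0 < #|In x.1 :&: S|.
    by apply/card_gt0P; exists x.2; rewrite !inE hx /= (map_f snd xws).
  have := le1 (In x.1); lia.
have h2 : \sum_(j | j != x.1) #|In j :\: S| <= \sum_(j | j != x.1) #|In j|.
  by apply: leq_sum => j _; apply: subset_leq_card; apply: subsetDl.
by rewrite -addSn; apply: leq_add.
Qed.
End Rev.

Lemma legal_ex j w : w \in Out j -> exists2 w', w' \in In j & legal j w w'.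
Proof.
move=> wO.
have hg6 := g6 G j.
case: (boolP (w \in A j)) => wA.
  have : 0 < #|In j :&: A j|.
    apply: leq_trans hg6; apply/card_gt0P; exists w; by rewrite inE wO.
  move/ex_in => [w' h1 h2]; exists w' => //; rewrite /legal !inE h2 /= ?implybT //.
have [lt|ge] := ltnP #|Out j :&: A j| #|In j :&: A j|.
  have : 0 < #|In j :&: A j| by lia.
  move/ex_in => [w' h1 h2]; exists w' => //; rewrite /legal !inE h2 /= ?implybT //.
have e : #|In j :&: A j| = #|Out j :&: A j| by lia.
have : 0 < #|In j| by rewrite (g5 G j); apply/card_gt0P; exists w.
rewrite card_gt0 => /set0Pn[w' h1]; exists w' => //.
by rewrite /legal (subsetP (g7 G e) _ h1) (negbTE wA).
Qed.

Lemma walk_ex j0 w0 : w0 \in In j0 -> exists ws, Wk In Out ws.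
Proof.
move=> hw0.
pose own w := odflt j0 [pick j | w \in Out j].
pose pickw j w := odflt w [pick w' | (w' \in In j) && legal j w w'].
pose nxt (x : I * O) := (own x.2, pickw (own x.2) x.2).
have Fstep : forall x, x.2 \in In x.1 -> ((nxt x).2 \in In (nxt x).1) && estep Out x (nxt x).
  move=> x hx; have [j hj] := g4 G hx.
  rewrite /nxt /own; case: pickP => [j' hj'|hn]; last by move: (hn j); rewrite hj.
  rewrite /= /pickw; case: pickP => [w' /andP[h1 h2]|hn].
    by rewrite /= h1 /estep /= hj' h2.
  by have [w' h1 h2] := legal_ex hj'; move: (hn w'); rewrite h1 h2.
have Inv_iter : forall k z, z.2 \in In z.1 -> (iter k nxt z).2 \in In (iter k nxt z).1.
  elim => [|k IH] z hz //=; by case/andP: (Fstep _ (IH z hz)).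
have path_tr : forall k z, z.2 \in In z.1 -> path (estep Out) z (traject nxt (nxt z) k).
  elim => [|k IH] z hz //=;
  by case/andP: (Fstep _ hz) => h1 ->; apply: IH.
pose x0 := (j0, w0).
have hx0 : x0.2 \in In x0.1 by [].
set N := #|{: I * O}|.
have lp : looping nxt x0 N.
  rewrite -[looping _ _ _]negbK -looping_uniq; apply/negP => u.
  have : size (traject nxt x0 N.+1) <= N by rewrite -(card_uniqP u); exact: max_card.
  by rewrite size_traject ltnn.
have [n ln nmin] := ex_minnP (ex_intro (fun n => looping nxt x0 n) _ lp).
case: n ln nmin => [|m] ln nmin; first by [].
have um : uniq (traject nxt x0 m.+1).
  rewrite looping_uniq; apply/negP => lm; have := nmin m lm; lia.
have [i li ei] : exists2 i, i < m.+1 & iter m.+1 nxt x0 = iter i nxt x0.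
  by move: ln; rewrite /looping => /trajectP.
set z := iter i nxt x0.
have hz : z.2 \in In z.1 by apply: Inv_iter.
have ep : m.+1 = i + (m.+1 - i) by lia.
have [p' ep'] : exists p', m.+1 - i = p'.+1 by exists (m - i); lia.
exists (traject nxt z (m.+1 - i)).
have uw : uniq (traject nxt z (m.+1 - i)).
  by move: um; rewrite -{1}(subnKC (ltnW li)) trajectD cat_uniq => /and3P[].
have allI : all (fun x => x.2 \in In x.1) (traject nxt z (m.+1 - i)).
  apply/allP => y /trajectP[k _ ->]; exact: Inv_iter.
split => //.
- by rewrite ep' trajectS.
- rewrite ep' trajectS /= -[rcons _ _]/(rcons (traject nxt (nxt z) p') z).
  have : iter p' nxt (nxt z) = z.
    by rewrite -iterSr -ep' /z -iterD subnK ?ei //; lia.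
  by move=> e; rewrite -[X in rcons _ X]e -trajectSr; apply: path_tr.
- rewrite (map_inj_in_uniq (f := snd)) // => a b ha hb eab.
  have Ia := allP allI _ ha; have Ib := allP allI _ hb.
  rewrite eab in Ia; have e1 := In_uniq Ia Ib.
  by case: a b eab e1 {ha hb Ia Ib} => [a1 a2] [b1 b2] /= -> ->.
Qed.

End G.

Lemma main n : forall In Out : I -> {set O}, \sum_j #|In j| <= n -> GoodIO In Out ->
  (exists j, #|Out j :&: A j| < #|In j :&: A j|) -> goodcycle.
Proof.
elim: n => [|n IH] In Out hn G [j hj].
  have : #|In j| <= \sum_j #|In j| by rewrite (bigD1 j) //=; lia.
  have : #|In j :&: A j| <= #|In j| by apply: subset_leq_card; apply: subsetIl.
  lia.
have : 0 < #|In j :&: A j| by lia.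
move/ex_in => [w0 hw0 _].
have [ws hW] := walk_ex G hw0.
case: (inner G (leqnn (size ws)) hW) => // -[ws' [hW' hns]].
have [G' hs hlt] := revert G hW' hns.
apply: (IH _ _ _ G'); first by lia.
by exists j; apply: hs.
Qed.

End Main.

Lemma card_bigcup_disj (T J : finType) (F : J -> {set T}) :
  (forall i j, i != j -> [disjoint F i & F j]) -> #|\bigcup_i F i| = \sum_i #|F i|.
Proof.
move=> d; have := partition_disjoint_bigcup addn (fun _ => 1) d.
rewrite sum1_card => ->; apply: eq_bigr => i _; by rewrite sum1_card.
Qed.

Section Final.
Variables (I O : finType) (Omega A B mu : I -> {set O}).

Lemma mu_cover : endowment Omega -> matching Omega mu -> forall o, exists j, o \in mu j.
Proof.
move=> [_ dO cO] [dm cm] o.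
have e : \bigcup_j mu j = [set: O].
  apply/eqP; rewrite eqEcard subsetT /= card_bigcup_disj // -cO card_bigcup_disj //.
  by rewrite (eq_bigr _ (fun i _ => cm i)).
have : o \in \bigcup_j mu j by rewrite e inE.
by case/bigcupP => j _ h; exists j.
Qed.

Lemma mu_AB : endowment Omega -> AB_profile Omega A B -> matching Omega mu ->
  cw_IR Omega (ab_marginal A B) mu -> forall i, mu i \subset A i :|: B i.
Proof.
move=> [ne _ _] hAB [_ cm] hIR i.
have [w0 w0O] := set0Pn _ (ne i).
case: (arg_minnP (lvl A B i) w0O) => w wO wmin.
have h := hIR i w wO.
have e1 : [set o in Omega i | ab_marginal A B i o w] = Omega i.
  by apply/setP => o; rewrite !inE /ab_marginal; case: (boolP (o \in Omega i)) => // /wmin.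
have e2 : [set o in mu i | ab_marginal A B i o w] = mu i.
  apply/eqP; rewrite eqEcard; apply/andP; split.
    by apply/subsetP => o; rewrite inE => /andP[].
  by rewrite cm -{1}e1.
have wAB : w \in A i :|: B i by have [_ /subsetP] := hAB i; apply.
have lw : 0 < lvl A B i w by move: wAB; rewrite /lvl /ab_level !inE; case: (w \in A i); case: (w \in B i).
apply/subsetP => o; rewrite -e2 inE => /andP[_ ho].
move: ho; rewrite /ab_marginal -/(lvl A B i w) -/(lvl A B i o) => ho.
have : 0 < lvl A B i o by lia.
by rewrite /lvl /ab_level !inE; case: (o \in A i); case: (o \in B i).
Qed.

End Final.

Theorem lemma2 (I O : finType) (Omega : I -> {set O})
  (A B : I -> {set O}) (mu : I -> {set O}) :
  endowment Omega ->
  AB_profile Omega A B ->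
  matching Omega mu ->
  cw_IR Omega (ab_marginal A B) mu ->
  (unamb_efficient Omega (ab_marginal A B) mu <->
   ~ (exists (x0 : I * O) (c : seq (I * O)),
        [/\ is_cycle mu x0 c, cycle_cw_IR A B x0 c & pareto_improving_cycle A mu x0 c])).
Proof.
move=> hend hAB hmu hIR; split.
  by move=> UE [x0 [c [h1 h2 h3]]]; exact: (forward_cycle hmu h1 h2 h3 UE).
move=> NG R hpref hresp mu' hmu' [hweak [j0 hstrict]]; apply: NG.
have sAB := mu_AB hend hAB hmu hIR.
have cov := mu_cover hend hmu.
case: hmu => mdisj mcard; case: hmu' => mdisj' mcard'.
have cons1 : forall j, consumption Omega j (mu j) by move=> j; rewrite /consumption mcard.
have cons2 : forall j, consumption Omega j (mu' j) by move=> j; rewrite /consumption mcard'.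
have D1 : forall j, #|mu j :&: A j| <= #|mu' j :&: A j|.
  move=> j; rewrite leqNgt; apply/negP => lt.
  exact: (domS (hpref j) (hresp j) (cons2 j) (cons1 j) (sAB j) (ltnW lt) (or_introl lt) (hweak j)).
have D2 : forall j, #|mu j :&: A j| = #|mu' j :&: A j| -> mu' j \subset A j :|: B j.
  move=> j e; apply/negPn/negP => ns.
  exact: (domS (hpref j) (hresp j) (cons2 j) (cons1 j) (sAB j) (eq_leq (esym e)) (or_intror ns) (hweak j)).
have D3 : #|mu j0 :&: A j0| < #|mu' j0 :&: A j0|.
  rewrite ltnNge; apply/negP => le; case: hstrict => _; apply.
  exact: (domR (hpref j0) (hresp j0) erefl (cons2 j0) (cons1 j0) (sAB j0) le).
pose In := fun j => mu' j :\: mu j.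
pose Out := fun j => mu j :\: mu' j.
have F1 : forall j, #|mu j :&: A j| = #|mu j :&: mu' j :&: A j| + #|Out j :&: A j|.
  by move=> j; apply: card_split.
have F2 : forall j, #|mu' j :&: A j| = #|mu j :&: mu' j :&: A j| + #|In j :&: A j|.
  by move=> j; rewrite [mu j :&: _]setIC; apply: card_split.
have G : GoodIO A B mu In Out.
  split.
  - by move=> j; apply: subsetDl.
  - move=> j; apply: disjI => w; rewrite inE => /andP[h1 _] h2; by rewrite h2 in h1.
  - move=> i i' ne; apply: disjI => w; rewrite !inE => /andP[_ h1] /andP[_ h2].
    exact: (disjF (mdisj' _ _ ne) h1 h2).
  - move=> i w; rewrite inE => /andP[wm wm'].
    have [j hj] := cov w; exists j; rewrite inE hj andbT.
    apply/negP => h; have ne : i != j by apply: contraNneq wm => ->.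
    exact: (disjF (mdisj' _ _ ne) wm' h).
  - by move=> j; rewrite !cardsD mcard mcard' setIC.
  - by move=> j; have := F1 j; have := F2 j; have := D1 j; lia.
  - move=> j e; apply: subset_trans (D2 j _); first by apply: subsetDl.
    by have := F1 j; have := F2 j; lia.
apply: (main mdisj (leqnn _) G); exists j0.
by have := F1 j0; have := F2 j0; lia.
Qed.
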